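(* The lattice width of a Delzant polytope $\Delta\subseteq\mathbb{R}^d$ coincides with its facet width.
   Context: A Delzant polytope is a full-dimensional polytope $\Delta\subseteq\mathbb{R}^d$ whose normal fan consists of unimodular cones, i.e. at each vertex the primitive inner normals of the incident facets form a basis of $(\mathbb{Z}^d)^*$. For $u\ne0$, $\mathrm{width}_u(\Delta)=\max_{x,y\in\Delta}|u(x)-u(y)|$. The lattice width is $\min_{u\in(\mathbb{Z}^d)^*\setminus\{0\}}\mathrm{width}_u(\Delta)$; the facet width is the minimum of $\mathrm{width}_u(\Delta)$ over the primitive facet normals $u\in(\mathbb{Z}^d)^*$ of $\Delta$. *)

(* Defs.v *)
From HB Require Import structures.
From mathcomp Require Import all_boot all_order all_algebra.
Set Implicit Arguments. Unset Strict Implicit. Unset Printing Implicit Defensive.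
Import Order.TTheory GRing.Theory Num.Theory.
Local Open Scope ring_scope.

Section Delzant.
Variables (R : realFieldType) (d : nat).

Definition pairing (u x : 'rV[R]_d) : R := \sum_(i < d) u 0 i * x 0 i.

Definition intfun (u : 'rV[int]_d) : 'rV[R]_d := map_mx (fun z : int => z%:~R) u.

Definition conv (V : seq 'rV[R]_d) (x : 'rV[R]_d) : Prop :=
  exists lam : 'I_(size V) -> R,
    [/\ forall i, 0 <= lam i, \sum_i lam i = 1 & x = \sum_i lam i *: V`_i].

(* F contains k+1 affinely independent points, i.e. dim aff(F) >= k *)
Definition aff_dim_ge (F : 'rV[R]_d -> Prop) (k : nat) : Prop :=
  exists (x0 : 'rV[R]_d) (X : 'M[R]_(k, d)),
    [/\ row_free X, F x0 & forall i, F (x0 + row i X)].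

Definition full_dimensional (P : 'rV[R]_d -> Prop) : Prop := aff_dim_ge P d.

Definition face (P : 'rV[R]_d -> Prop) (u : 'rV[R]_d) (x : 'rV[R]_d) : Prop :=
  P x /\ forall y, P y -> pairing u x <= pairing u y.

Definition is_facet (P F : 'rV[R]_d -> Prop) : Prop :=
  exists u : 'rV[R]_d, u != 0 /\ (forall x, F x <-> face P u x) /\ aff_dim_ge F d.-1.

Definition is_vertex (P : 'rV[R]_d -> Prop) (v : 'rV[R]_d) : Prop :=
  exists u : 'rV[R]_d, forall x, face P u x <-> x = v.

Definition primitive (u : 'rV[int]_d) : Prop :=
  u != 0 /\ forall (k : int) (w : 'rV[int]_d), u = k *: w -> `|k| = 1.

Definition facet_normal (P : 'rV[R]_d -> Prop) (u : 'rV[int]_d) : Prop :=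
  primitive u /\ is_facet P (face P (intfun u)).

(* Delzant polytope: full-dimensional, every facet has a primitive integer
   inner normal, and at every vertex the primitive inner normals of the
   facets through that vertex form a basis of Z^d (they are exactly the rows
   of a unimodular integer matrix). *)
Definition delzant (P : 'rV[R]_d -> Prop) : Prop :=
  [/\ full_dimensional P,
      (forall F, is_facet P F ->
         exists u, primitive u /\ forall x, F x <-> face P (intfun u) x)
    & forall v, is_vertex P v ->
        exists M : 'M[int]_d, M \in unitmx /\
          forall u, (facet_normal P u /\ face P (intfun u) v) <->
                    exists i, u = row i M].

Definition is_width (P : 'rV[R]_d -> Prop) (u : 'rV[R]_d) (w : R) : Prop :=
  (exists x y, [/\ P x, P y & `|pairing u x - pairing u y| = w]) /\
  (forall x y, P x -> P y -> `|pairing u x - pairing u y| <= w).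

Definition is_lattice_width (P : 'rV[R]_d -> Prop) (w : R) : Prop :=
  (exists u : 'rV[int]_d, u != 0 /\ is_width P (intfun u) w) /\
  (forall (u : 'rV[int]_d) w', u != 0 -> is_width P (intfun u) w' -> w <= w').

Definition is_facet_width (P : 'rV[R]_d -> Prop) (w : R) : Prop :=
  (exists u : 'rV[int]_d, facet_normal P u /\ is_width P (intfun u) w) /\
  (forall (u : 'rV[int]_d) w', facet_normal P u -> is_width P (intfun u) w' -> w <= w').

End Delzant.

(* Main.v *)
Require Import Defs.
From HB Require Import structures.
From mathcomp Require Import all_boot all_order all_algebra.
From mathcomp.algebra_tactics Require Import ring lra.
From mathcomp Require Import zify.
From Stdlib Require Import Classical.
Set Implicit Arguments. Unset Strict Implicit. Unset Printing Implicit Defensive.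
Import Order.TTheory GRing.Theory Num.Theory.
Local Open Scope ring_scope.


Section Pairing.
Variables (R : realFieldType) (d : nat).
Implicit Types (u x y : 'rV[R]_d).

Lemma pairingC u x : pairing u x = pairing x u.
Proof. by apply: eq_bigr => i _; rewrite mulrC. Qed.

Lemma pairingDr u x y : pairing u (x + y) = pairing u x + pairing u y.
Proof. rewrite /pairing -big_split /=; apply: eq_bigr => i _; by rewrite mxE mulrDr. Qed.

Lemma pairingZr u a x : pairing u (a *: x) = a * pairing u x.
Proof. rewrite /pairing mulr_sumr; apply: eq_bigr => i _; by rewrite mxE mulrCA. Qed.

Lemma pairingNr u x : pairing u (- x) = - pairing u x.
Proof. by rewrite -scaleN1r pairingZr mulN1r. Qed.

Lemma pairingBr u x y : pairing u (x - y) = pairing u x - pairing u y.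
Proof. by rewrite pairingDr pairingNr. Qed.

Lemma pairing0r u : pairing u 0 = 0.
Proof. by rewrite -(scale0r (0 : 'rV[R]_d)) pairingZr mul0r. Qed.

Lemma pairing_sumr u n (F : 'I_n -> 'rV[R]_d) :
  pairing u (\sum_(i < n) F i) = \sum_(i < n) pairing u (F i).
Proof.
apply: (big_ind2 (fun a b => pairing u a = b)) => //; first exact: pairing0r.
by move=> x1 y1 x2 y2 <- <-; rewrite pairingDr.
Qed.

Lemma pairingDl u x y : pairing (x + y) u = pairing x u + pairing y u.
Proof. by rewrite !(pairingC _ u) pairingDr. Qed.
Lemma pairingZl u a x : pairing (a *: x) u = a * pairing x u.
Proof. by rewrite !(pairingC _ u) pairingZr. Qed.
Lemma pairingNl u x : pairing (- x) u = - pairing x u.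
Proof. by rewrite !(pairingC _ u) pairingNr. Qed.
Lemma pairingBl u x y : pairing (x - y) u = pairing x u - pairing y u.
Proof. by rewrite !(pairingC _ u) pairingBr. Qed.
Lemma pairing0l u : pairing 0 u = 0.
Proof. by rewrite pairingC pairing0r. Qed.
Lemma pairing_suml u n (F : 'I_n -> 'rV[R]_d) :
  pairing (\sum_(i < n) F i) u = \sum_(i < n) pairing (F i) u.
Proof. rewrite pairingC pairing_sumr; apply: eq_bigr => i _; exact: pairingC. Qed.

Lemma pairing_ge0 x : 0 <= pairing x x.
Proof. by apply: sumr_ge0 => i _; rewrite -expr2 sqr_ge0. Qed.

Lemma pairing_eq0 x : pairing x x = 0 -> x = 0.
Proof.
move=> /eqP; rewrite psumr_eq0 => [/allP H|i _]; last by rewrite -expr2 sqr_ge0.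
apply/rowP => i; rewrite mxE; apply/eqP; rewrite -sqrf_eq0 expr2.
exact: (H i (mem_index_enum _)).
Qed.

Lemma pairing_mulmx n (a : 'rV[R]_n) (A : 'M[R]_(n, d)) x :
  pairing (a *m A) x = \sum_(i < n) a 0 i * pairing (row i A) x.
Proof.
rewrite /pairing.
under eq_bigr => j _ do rewrite mxE mulr_suml.
rewrite exchange_big /=; apply: eq_bigr => i _; rewrite mulr_sumr.
by apply: eq_bigr => j _; rewrite mxE mulrA.
Qed.

End Pairing.


Lemma ex_argmin (R : realFieldType) (I : finType) (P : pred I) (f : I -> R) i0 :
  P i0 -> exists i, P i /\ forall j, P j -> f i <= f j.
Proof. move=> Pi0; case: (arg_minP f Pi0) => i Pi H; exists i; split => // j Pj; exact: H. Qed.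

Lemma ex_argmax (R : realFieldType) (I : finType) (P : pred I) (f : I -> R) i0 :
  P i0 -> exists i, P i /\ forall j, P j -> f j <= f i.
Proof.
move=> /(ex_argmin (fun i => - f i)) [i [Pi H]]; exists i; split => // j /H.
by rewrite lerN2.
Qed.

Section Conv.
Variables (R : realFieldType) (d : nat) (V : seq 'rV[R]_d).

Lemma conv_nth (k : 'I_(size V)) : conv V V`_k.
Proof.
exists (fun i => (i == k)%:R); split.
- by move=> i; rewrite ler0n.
- by rewrite (bigD1 k) //= eqxx big1 ?addr0 // => i /negbTE ->.
- by rewrite (bigD1 k) //= eqxx scale1r big1 ?addr0 // => i /negbTE ->; rewrite scale0r.
Qed.

Lemma conv_pairing u x lam : x = \sum_(i < size V) lam i *: V`_i ->
  pairing u x = \sum_(i < size V) lam i * pairing u V`_i.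
Proof. by move=> ->; rewrite pairing_sumr; apply: eq_bigr => i _; rewrite pairingZr. Qed.

Lemma conv_lb u c x : conv V x ->
  (forall k : 'I_(size V), c <= pairing u V`_k) -> c <= pairing u x.
Proof.
move=> [lam [l0 l1 ->]] H; rewrite (conv_pairing u (erefl _)).
have -> : c = \sum_(i < size V) lam i * c by rewrite -mulr_suml l1 mul1r.
by apply: ler_sum => i _; apply: ler_wpM2l.
Qed.

Lemma conv_ub u c x : conv V x ->
  (forall k : 'I_(size V), pairing u V`_k <= c) -> pairing u x <= c.
Proof.
move=> Hx H; rewrite -lerN2 -pairingNl; apply: conv_lb => // k.
by rewrite pairingNl lerN2.
Qed.

Lemma conv_nonempty x : conv V x -> (0 < size V)%N.
Proof.
case: V => [|//] [lam [_ l1 _]]; move: l1; rewrite big_ord0 => /eqP.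
by rewrite eq_sym oner_eq0.
Qed.

Lemma ex_width x u : conv V x -> exists w, is_width (conv V) u w.
Proof.
move=> /conv_nonempty Hs.
have [kM [_ HM]] := @ex_argmax R _ predT (fun k : 'I_(size V) => pairing u V`_k) (Ordinal Hs) isT.
have [km [_ Hm]] := @ex_argmin R _ predT (fun k : 'I_(size V) => pairing u V`_k) (Ordinal Hs) isT.
exists (pairing u V`_kM - pairing u V`_km); split.
  exists V`_kM, V`_km; split; try exact: conv_nth.
  by rewrite ger0_norm // subr_ge0; apply: Hm.
move=> y z Hy Hz.
have y1 := conv_lb Hy (fun k => Hm k isT); have y2 := conv_ub Hy (fun k => HM k isT).
have z1 := conv_lb Hz (fun k => Hm k isT); have z2 := conv_ub Hz (fun k => HM k isT).
rewrite ler_norml; apply/andP; split; lra.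
Qed.

Lemma width_unique u w1 w2 : is_width (conv V) u w1 -> is_width (conv V) u w2 -> w1 = w2.
Proof.
move=> [[x1 [y1 [Px1 Py1 E1]]] B1] [[x2 [y2 [Px2 Py2 E2]]] B2].
apply/eqP; rewrite eq_le; apply/andP; split.
  by rewrite -E1; apply: B2.
by rewrite -E2; apply: B1.
Qed.

End Conv.


Section Vertex.
Variables (R : realFieldType) (d : nat) (V : seq 'rV[R]_d).

Lemma vertex_exists y x : conv V x ->
  exists k : 'I_(size V), is_vertex (conv V) V`_k /\ face (conv V) y V`_k.
Proof.
move=> /conv_nonempty Hs.
have [km [_ Hm]] := @ex_argmin R _ predT (fun k : 'I_(size V) => pairing y V`_k) (Ordinal Hs) isT.
set m := pairing y V`_km.
have [kp [Pkp Hp]] := @ex_argmax R _ (fun k : 'I_(size V) => pairing y V`_k == m)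
   (fun k : 'I_(size V) => pairing V`_k V`_k) km (eqxx _).
set p := V`_kp.
have ym : pairing y p = m by apply/eqP.
set K := 1 + \sum_(i < size V | pairing y V`_i != m)
            `|pairing p V`_i - pairing p p| / (pairing y V`_i - m).
set l := K *: y - p.
have gE z : pairing l z = K * pairing y z - pairing p z.
  by rewrite /l pairingBl pairingZl.
have C1 : forall i : 'I_(size V), pairing l p <= pairing l V`_i /\
            (pairing l V`_i = pairing l p -> V`_i = p).
  move=> i; rewrite !gE ym.
  have ymi : m <= pairing y V`_i by apply: Hm.
  case: (boolP (pairing y V`_i == m)) => [/eqP Ei|Ni].
    rewrite Ei.
    have Hi : pairing V`_i V`_i <= pairing p p by apply: Hp; apply/eqP.
    have qq : pairing (V`_i - p) (V`_i - p) =
        pairing V`_i V`_i - 2 * pairing p V`_i + pairing p p.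
      rewrite !pairingBl !pairingBr (pairingC V`_i p); ring.
    have q0 := pairing_ge0 (V`_i - p).
    split; first lra.
    move=> E; apply/eqP; rewrite -subr_eq0; apply/eqP; apply: pairing_eq0.
    apply/eqP; rewrite eq_le q0 andbT; lra.
  have lt : m < pairing y V`_i by rewrite lt_def Ni ymi.
  set t := `|pairing p V`_i - pairing p p| / (pairing y V`_i - m).
  have tK : 1 + t <= K.
    rewrite lerD2l /K (bigD1 i) //= lerDl; apply: sumr_ge0 => j _.
    rewrite divr_ge0 //.
    case: (boolP (pairing y V`_j == m)) => [/eqP ->|Nj]; first by rewrite subrr.
    by rewrite subr_ge0 Hm.
  have tE : t * (pairing y V`_i - m) = `|pairing p V`_i - pairing p p|.
    rewrite /t mulfVK //; by rewrite subr_eq0.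
  have ab := ler_norm (pairing p V`_i - pairing p p).
  have pos : 0 < pairing y V`_i - m by rewrite subr_gt0.
  have H2 : (1 + t) * (pairing y V`_i - m) <= K * (pairing y V`_i - m).
    by rewrite ler_pM2r.
  rewrite mulrDl mul1r tE !mulrBr in H2.
  have key : K * m - pairing p p < K * pairing y V`_i - pairing p V`_i.
    move: H2 ab pos; clearbody t K; clear; move=> *; lra.
  split; first exact: ltW.
  by move=> E; move: key; rewrite E ltxx.
have pP : conv V p by exact: (conv_nth kp).
exists kp; split; last first.
  split => // z Pz; rewrite ym; apply: conv_lb Pz _ => k; exact: Hm.
exists l => z; split; last first.
  move=> ->; split => // w Pw; apply: conv_lb Pw _ => k; exact: (C1 k).1.
move=> [[lam [l0 l1 zE]] Hz].
have gz := Hz p pP.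
have S : \sum_(i < size V) lam i * (pairing l V`_i - pairing l p) = 0.
  apply/eqP; rewrite eq_le; apply/andP; split; last first.
    apply: sumr_ge0 => i _; apply: mulr_ge0 => //; rewrite subr_ge0; exact: (C1 i).1.
  have -> : \sum_(i < size V) lam i * (pairing l V`_i - pairing l p) =
     pairing l z - pairing l p.
    rewrite (conv_pairing l zE).
    under eq_bigr => i _ do rewrite mulrBr.
    by rewrite sumrB -mulr_suml l1 mul1r.
  by rewrite subr_le0.
have Z : forall i, lam i * (pairing l V`_i - pairing l p) = 0.
  move=> i; apply: (psumr_eq0P _ S) => // j _.
  apply: mulr_ge0 => //; rewrite subr_ge0; exact: (C1 j).1.
have T i : lam i *: V`_i = lam i *: p.
  move/eqP: (Z i); rewrite mulf_eq0 => /orP [/eqP ->|]; first by rewrite !scale0r.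
  by rewrite subr_eq0 => /eqP /(C1 i).2 ->.
rewrite zE; under eq_bigr => i _ do rewrite T.
by rewrite -scaler_suml l1 scale1r.
Qed.

End Vertex.


Section Farkas.
Variables (R : realFieldType) (d : nat).

Definition incone (G : seq 'rV[R]_d) (e : 'rV[R]_d) : Prop :=
  exists mu : nat -> R, (forall i, 0 <= mu i) /\ e = \sum_(i < size G) mu i *: G`_i.

Lemma incone_cons a G e t : 0 <= t -> incone G (e - t *: a) -> incone (a :: G) e.
Proof.
move=> t0 [mu [mu0 E]].
exists (fun i => if i is i'.+1 then mu i' else t); split; first by case.
have S : \sum_(i < size G) (if (lift ord0 i : nat) is i'.+1 then mu i' else t)
    *: (a :: G)`_(lift ord0 i) = \sum_(i < size G) mu i *: G`_i.
  by apply: eq_bigr => i _; rewrite lift0.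
rewrite big_ord_recl S -E.
by rewrite [X in _ = X + _]/= addrC subrK.
Qed.

Lemma farkas n : forall (G : seq 'rV[R]_d) e, size G = n -> ~ incone G e ->
  exists y, (forall i, (i < size G)%N -> 0 <= pairing y G`_i) /\ pairing y e < 0.
Proof.
elim: n => [|n IH] G e.
  move=> /size0nil -> Hn; exists (- e); split => // .
  have e0 : e != 0.
    apply/eqP => E; apply: Hn; exists (fun _ => 0); split => //.
    by rewrite big_ord0.
  rewrite pairingNl oppr_lt0 lt_def pairing_ge0 andbT.
  by apply/eqP => /pairing_eq0 /eqP; apply/negP.
case: G => [//|a G'] /= [sG] Hn.
have Hn' : ~ incone G' e.
  by move=> Hc; apply: Hn; apply: (incone_cons (t:=0)) => //; rewrite scale0r subr0.
have [y' [Hy' ye]] := IH G' e sG Hn'.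
case: (lerP 0 (pairing y' a)) => ya.
  exists y'; split => // -[|i] //= Hi; exact: Hy'.
set s := pairing y' a.
have s0 : s != 0 by rewrite lt_eqF.
pose f g := g - (pairing y' g / s) *: a.
have Hn'' : ~ incone (map f G') (f e).
  move=> [mu [mu0 E]]; apply: Hn.
  pose t := pairing y' e / s - \sum_(i < size G') mu i * (pairing y' G'`_i / s).
  apply: (incone_cons (t := t)).
    rewrite /t subr_ge0; apply: le_trans (_ : 0 <= _).
      apply: sumr_le0 => i _; apply: mulr_ge0_le0 => //.
      by apply: mulr_ge0_le0; [exact: Hy' | rewrite invr_le0 ltW].
    by rewrite ler_ndivlMr // mul0r ltW.
  exists mu; split => //.
  have E2 : f e = \sum_(i < size G') mu i *: G'`_i -
       (\sum_(i < size G') mu i * (pairing y' G'`_i / s)) *: a.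
    rewrite E size_map scaler_suml -sumrB; apply: eq_bigr => i _.
    by rewrite (nth_map 0) // /f scalerBr scalerA.
  have Z : forall (A B C e' : 'rV[R]_d), e' - B = A - C -> e' - (B - C) = A.
    by move=> A B C e' H; rewrite opprB addrCA H addrC subrK.
  by rewrite /t scalerBl; apply: Z; rewrite -E2.
have sz : size (map f G') = n by rewrite size_map.
have [y'' [Hy'' ye'']] := IH (map f G') (f e) sz Hn''.
set y := y'' - (pairing y'' a / s) *: y'.
have key g : pairing y g = pairing y'' (f g).
  rewrite /y /f pairingBl pairingZl pairingBr pairingZr; rewrite -/s.
  ring.
exists y; split; last by rewrite key.
case => [|i] /= Hi.
  rewrite key /f -/s divff // scale1r subrr pairing0r //.
rewrite key; have := Hy'' i; rewrite size_map (nth_map 0) //; exact.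
Qed.

End Farkas.


Section Rotate.
Variables (R : realFieldType) (d : nat).

Lemma pairing_tr (u x : 'rV[R]_d) : pairing u x = (u *m x^T) 0 0.
Proof. by rewrite mxE; apply: eq_bigr => j _; rewrite mxE. Qed.

Lemma mulmx_tr_row m (w : 'rV[R]_d) (B : 'M[R]_(m, d)) r :
  (w *m B^T) 0 r = pairing w (row r B).
Proof. by rewrite mxE; apply: eq_bigr => j _; rewrite !mxE. Qed.

Lemma free_of_inj m (X : 'M[R]_(m, d)) :
  (forall a : 'rV[R]_m, a *m X = 0 -> a = 0) -> row_free X.
Proof.
move=> H; rewrite -kermx_eq0; apply/eqP/row_matrixP => i.
rewrite row0; apply: H; by rewrite -row_mul mulmx_ker row0.
Qed.

Lemma ortho_exists m (B : 'M[R]_(m, d)) : (m < d)%N ->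
  exists w : 'rV[R]_d, w != 0 /\ forall r, pairing w (row r B) = 0.
Proof.
move=> lt.
have : kermx B^T != 0.
  rewrite -mxrank_eq0 mxrank_ker mxrank_tr subn_eq0 -ltnNge.
  exact: leq_ltn_trans (rank_leq_row B) lt.
case: (boolP [exists i, row i (kermx B^T) != 0]).
  move=> /existsP [i Hi] _; exists (row i (kermx B^T)); split => // r.
  by rewrite -mulmx_tr_row -row_mul mulmx_ker row0 mxE.
rewrite negb_exists => /forallP H /negP []; apply/eqP/row_matrixP => i.
by move: (H i); rewrite negbK row0 => /eqP.
Qed.

Variables (G : seq 'rV[R]_d) (e : 'rV[R]_d).
Hypothesis ND : forall w, (forall i, (i < size G)%N -> pairing w G`_i = 0) -> w = 0.

Definition rot_inv k z (X : 'M[R]_(k, d)) :=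
  [/\ forall i, (i < size G)%N -> 0 <= pairing z G`_i, pairing z e < 0, row_free X,
      forall r, exists2 i, (i < size G)%N & row r X = G`_i
    & forall r, pairing z (row r X) = 0].

Lemma rotate z : (forall i, (i < size G)%N -> 0 <= pairing z G`_i) -> pairing z e < 0 ->
  forall k, (k <= d.-1)%N -> exists z' (X : 'M[R]_(k, d)), rot_inv z' X.
Proof.
move=> z0 ze; elim => [|k IH] Hk.
  exists z, 0; split => //; try by case.
  by rewrite /row_free mxrank0.
have [z1 [X [Hz1 ez1 fX rX oX]]] := IH (ltnW Hk).
have lt : (k + 1 < d)%N by lia.
have [w [w0 Hw]] := ortho_exists (col_mx X e) lt.
have Hw0 : exists i, (i < size G)%N /\ pairing w G`_i != 0.
  apply: NNPP => Hn; move/eqP: w0; apply; apply: ND => i Hi.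
  apply/eqP; apply: contraT => Hne; case: Hn; by exists i.
have [w' [wX we [i0 [Hi0 wi0]]]] : exists w' : 'rV[R]_d,
    [/\ forall r, pairing w' (row r X) = 0, pairing w' e = 0 &
        exists i, (i < size G)%N /\ pairing w' G`_i < 0].
  have wX r : pairing w (row r X) = 0 by rewrite -(Hw (lshift 1 r)) rowKu.
  have we : pairing w e = 0.
    rewrite -(Hw (rshift k ord0)) rowKd; congr pairing; apply/rowP => j.
    by rewrite mxE.
  case: Hw0 => i [Hi wi]; case: (ltrgtP (pairing w G`_i) 0) => wl; last by rewrite wl eqxx in wi.
    by exists w; split => //; exists i.
  exists (- w); split.
  - by move=> r; rewrite pairingNl wX oppr0.
  - by rewrite pairingNl we oppr0.
  - by exists i; split => //; rewrite pairingNl oppr_lt0.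
have Hs : (i0 < size G)%N := Hi0.
have [im [Pim Him]] := @ex_argmin R _ (fun i : 'I_(size G) => pairing w' G`_i < 0)
   (fun i : 'I_(size G) => pairing z1 G`_i / (- pairing w' G`_i)) (Ordinal Hs) wi0.
set t := pairing z1 G`_im / (- pairing w' G`_im).
have t0 : 0 <= t by rewrite /t divr_ge0 // ?Hz1 // oppr_ge0 ltW.
set z2 := z1 + t *: w'.
have z2E x : pairing z2 x = pairing z1 x + t * pairing w' x by rewrite pairingDl pairingZl.
rewrite -[k.+1]addn1; exists z2, (col_mx X G`_im); split.
- move=> i Hi; rewrite z2E.
  case: (lerP 0 (pairing w' G`_i)) => wi.
    by apply: addr_ge0; [exact: Hz1 | exact: mulr_ge0].
  have := Him (Ordinal Hi) wi; rewrite -/t /= ler_pdivlMr ?oppr_gt0 // mulrN.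
  rewrite -subr_ge0 opprK addrC. by [].
- by rewrite z2E we mulr0 addr0.
- apply: free_of_inj => a.
  rewrite -[a]hsubmxK mul_row_col => Ha.
  have a2 : rsubmx a = 0.
    have := congr1 (pairing w') Ha; rewrite pairing0r pairingDr.
    rewrite pairingC pairing_mulmx big1 ?add0r; last first.
      by move=> r _; rewrite pairingC wX mulr0.
    rewrite pairingC pairing_mulmx big_ord1 => /eqP; rewrite mulf_eq0 => /orP [/eqP a0|].
      by apply/rowP => j; rewrite (ord1 j) [RHS]mxE; exact: a0.
    have -> : row ord0 G`_im = G`_im by apply/rowP => j; rewrite mxE.
    by rewrite pairingC lt_eqF.
  move: Ha; rewrite a2 mul0mx addr0 => /eqP; rewrite mulmx_free_eq0 // => /eqP ->.
  by rewrite row_mx0.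
- move=> r; rewrite -(splitK r); case: (split r) => j /=.
    by rewrite rowKu; exact: rX.
  rewrite rowKd (ord1 j); exists im => //.
  by apply/rowP => l; rewrite mxE.
- move=> r; rewrite -(splitK r); case: (split r) => j /=.
    by rewrite rowKu z2E oX wX mulr0 addr0.
  rewrite rowKd (ord1 j).
  have -> : row 0 G`_im = G`_im by apply/rowP => l; rewrite mxE.
  have nz : pairing w' G`_im != 0 by rewrite lt_eqF.
  by rewrite z2E /t invrN mulrN mulNr mulfVK // subrr.
Qed.

End Rotate.


Section Key.
Variables (R : realFieldType) (d : nat) (V : seq 'rV[R]_d).
Local Notation P := (conv V).

Definition Gv (v : 'rV[R]_d) := [seq x - v | x <- V].
Lemma nth_G v i : (i < size V)%N -> (Gv v)`_i = V`_i - v.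
Proof. by move=> Hi; rewrite (nth_map 0). Qed.

Lemma ND_lemma v : full_dimensional P -> P v ->
  forall w, (forall i, (i < size (Gv v))%N -> pairing w (Gv v)`_i = 0) -> w = 0.
Proof.
move=> [x0 [X [fX Px0 PX]]] Pv w H.
have Hp p : P p -> pairing w p = pairing w v.
  move=> [lam [l0 l1 E]]; rewrite (conv_pairing w E).
  under eq_bigr => i _ do
    (have := H i; rewrite size_map (ltn_ord i) nth_G // pairingBr => /(_ isT) /eqP;
     rewrite subr_eq0 => /eqP ->).
  by rewrite -mulr_suml l1 mul1r.
have Z : w *m X^T = 0.
  apply/rowP => i; rewrite mulmx_tr_row mxE.
  have := Hp _ (PX i); rewrite pairingDr Hp // => /eqP; rewrite -subr_eq0 addrC addKr.
  by move/eqP.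
move/eqP: Z; rewrite mulmx_free_eq0 ?row_free_unit ?unitmx_tr -?row_free_unit //.
by move/eqP.
Qed.

Lemma parallel (z a : 'rV[R]_d) (X : 'M[R]_(d.-1, d)) : (0 < d)%N -> row_free X ->
  (forall r, pairing z (row r X) = 0) -> (forall r, pairing a (row r X) = 0) ->
  a != 0 -> exists c, z = c *: a.
Proof.
move=> d0 fX Hz Ha a0.
have Kz : (z <= kermx X^T)%MS.
  by apply/sub_kermxP; apply/rowP => r; rewrite mulmx_tr_row mxE Hz.
have Ka : (a <= kermx X^T)%MS.
  by apply/sub_kermxP; apply/rowP => r; rewrite mulmx_tr_row mxE Ha.
have rK : \rank (kermx X^T) = 1%N.
  rewrite mxrank_ker mxrank_tr; move: fX; rewrite /row_free => /eqP ->; lia.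
have Ka' : (kermx X^T <= a)%MS.
  by case: (mxrank_leqif_sup Ka) => _ <-; rewrite rank_rV a0 rK.
have /submxP [D ->] := submx_trans Kz Ka'.
by exists (D 0 0); rewrite {1}[D]mx11_scalar mul_scalar_mx.
Qed.

Lemma is_facet_ext (F F' : 'rV[R]_d -> Prop) :
  (forall x, F x <-> F' x) -> is_facet P F -> is_facet P F'.
Proof.
move=> E [u [u0 [Hu [x0 [X [fX Fx0 FX]]]]]].
exists u; split => //; split.
  by move=> x; rewrite -E.
by exists x0, X; split => //; [rewrite -E | move=> i; rewrite -E].
Qed.

Definition intmx (M : 'M[int]_d) : 'M[R]_d := map_mx (fun z : int => z%:~R) M.

Lemma intmx_unit (M : 'M[int]_d) : M \in unitmx -> intmx M \in unitmx.
Proof.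
rewrite !unitmxE /intmx det_map_mx unitfE intr_eq0 => H.
by apply/eqP => E; move: H; rewrite E unitr0.
Qed.

Lemma dual_pairing (A : 'M[R]_d) i j : A \in unitmx ->
  pairing (row i A) (row j (invmx A)^T) = (i == j)%:R.
Proof.
move=> uA; have := congr1 (fun B : 'M[R]_d => B i j) (mulmxV uA).
rewrite !mxE => <-; apply: eq_bigr => k _; by rewrite !mxE.
Qed.

Lemma key_lemma (v : 'rV[R]_d) (M : 'M[int]_d) (y : 'rV[R]_d) :
  (0 < d)%N -> full_dimensional P ->
  (forall F, is_facet P F ->
         exists u, primitive u /\ forall x, F x <-> face P (intfun R u) x) ->
  M \in unitmx ->
  (forall u, (facet_normal P u /\ face P (intfun R u) v) <-> exists i, u = row i M) ->
  face P y v -> forall j, 0 <= (y *m invmx (intmx M)) 0 j.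
Proof.
move=> d0 FD FN uM HM [Pv Hv] j.
set A := intmx M.
have uA : A \in unitmx by apply: intmx_unit.
set G := Gv v.
have ND := ND_lemma FD Pv.
have sG : size G = size V by rewrite size_map.
have PV l : (l < size V)%N -> P V`_l.
  by move=> Hl; have := conv_nth (Ordinal Hl).
have yG l : (l < size G)%N -> 0 <= pairing y G`_l.
  by rewrite sG => Hl; rewrite nth_G // pairingBr subr_ge0; apply: Hv; apply: PV.
apply: contraT; rewrite -ltNge => aj.
set e := row j (invmx A)^T.
have ye : pairing y e < 0.
  by move: aj; rewrite mxE; congr (_ < _); apply: eq_bigr => k _; rewrite !mxE.
have Nc : ~ incone G e.
  move=> [mu [mu0 E]]; move: ye; rewrite E pairing_sumr ltNge; case/negP.
  by apply: sumr_ge0 => i _; rewrite pairingZr mulr_ge0 // yG.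
have [z0 [Hz0 ez0]] := farkas (erefl _) Nc.
have [z [X [Hz ez fX rX oX]]] := rotate ND Hz0 ez0 (leqnn d.-1).
have z0' : z != 0 by apply/eqP => E; move: ez; rewrite E pairing0l ltxx.
have faceV l : (l < size V)%N -> pairing z G`_l = 0 -> face P z V`_l.
  move=> Hl; rewrite nth_G // pairingBr => /eqP; rewrite subr_eq0 => /eqP zl.
  split; first exact: PV.
  move=> x Px; rewrite zl; apply: conv_lb Px _ => k.
  by have := Hz k; rewrite sG ltn_ord nth_G // pairingBr subr_ge0 => /(_ isT).
have fzv : face P z v.
    split => // x Px; apply: conv_lb Px _ => k.
    by have := Hz k; rewrite sG ltn_ord nth_G // pairingBr subr_ge0 => /(_ isT).
have Fz : is_facet P (face P z).
  exists z; split => //; split => //.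
  exists v, X; split => //.
  move=> r; case: (rX r) => l Hl E; have Ol := oX r; rewrite E in Ol *.
  rewrite sG in Hl; rewrite nth_G // addrC subrK; exact: faceV.
have [u [pu Hu]] := FN _ Fz.
have fnu : facet_normal P u := conj pu (is_facet_ext Hu Fz).
have vu : face P (intfun R u) v by apply/Hu.
have [i ui] := (HM u).1 (conj fnu vu).
have Ai : intfun R u = row i A by rewrite ui /intfun /A /intmx map_row.
have Ai1 : pairing (row i A) (row i (invmx A)^T) = 1 by rewrite dual_pairing // eqxx.
have nz : row i A != 0 by apply/eqP => E; move: Ai1; rewrite E pairing0l => /eqP; rewrite eq_sym oner_eq0.
have HA r : pairing (row i A) (row r X) = 0.
  case: (rX r) => l Hl E; have Ol := oX r; rewrite E in Ol *.
  rewrite sG in Hl.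
  have Fl : face P (intfun R u) V`_l by apply/Hu; apply: faceV.
  rewrite nth_G // pairingBr -Ai; apply/eqP; rewrite subr_eq0 eq_le.
  by rewrite (Fl.2 _ Pv) (vu.2 _ Fl.1).
have [c zc] := parallel d0 fX oX HA nz.
move: ez; rewrite zc pairingZl /e.
case: (eqVneq i j) => [Eij|Nij]; last by rewrite dual_pairing // (negbTE Nij) mulr0 ltxx.
rewrite -Eij dual_pairing // eqxx mulr1 => c0.
suff: row i A = 0 by move=> E; move: nz; rewrite E eqxx.
apply: ND => l Hl.
have Hl' := Hl; rewrite sG in Hl'.
have a1 : 0 <= pairing (row i A) G`_l.
  by rewrite nth_G // pairingBr subr_ge0 -Ai; apply: vu.2; apply: PV.
have := Hz l Hl; rewrite zc pairingZl => cl.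
apply/eqP; rewrite eq_le a1 andbT.
by rewrite -(nmulr_rge0 _ c0).
Qed.

End Key.


Section Main.
Variables (R : realFieldType) (d : nat) (V : seq 'rV[R]_d).
Local Notation P := (conv V).
Hypothesis d0 : (0 < d)%N.
Hypothesis Hdel : delzant P.

Lemma pt : exists x0, P x0.
Proof. by case: Hdel => [[x0 [X [_ Px0 _]]] _ _]; exists x0. Qed.

Lemma cmp_lemma (u : 'rV[int]_d) w' : u != 0 -> is_width P (intfun R u) w' ->
  exists u', facet_normal P u' /\ forall w'', is_width P (intfun R u') w'' -> w'' <= w'.
Proof.
move=> u0 [_ Bw].
case: Hdel => FD FN VX.
have [x0 Px0] := pt.
have [k [vk [Pv Hv]]] := vertex_exists (intfun R u) Px0.
set v := V`_k in vk Pv Hv.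
have [M [uM HM]] := VX _ vk.
set A := intmx R M.
have uA : A \in unitmx by apply: intmx_unit.
have KL := key_lemma d0 FD FN uM HM (conj Pv Hv).
set b := u *m invmx M.
have invA : map_mx (fun z : int => (z%:~R : R)) (invmx M) = invmx A.
  have E : A *m map_mx (fun z : int => (z%:~R : R)) (invmx M) = 1%:M.
    by rewrite /A /intmx -map_mxM mulmxV // map_mx1.
  by rewrite -[LHS](mulKmx uA) E mulmx1.
have uE : intfun R u = intfun R b *m A.
  by rewrite /A /intmx /intfun -map_mxM /b mulmxKV.
have bE : intfun R u *m invmx A = intfun R b by rewrite /intfun /b map_mxM -/(intfun R u) invA.
have b0 j : 0 <= b 0 j by have := KL j; rewrite bE mxE ler0z.
have [j bj] : exists j, b 0 j != 0.
  apply: NNPP => H; move/eqP: u0; apply; rewrite -(mulmxKV uM u) -/b.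
  have -> : b = 0.
    apply/rowP => j; rewrite [RHS]mxE; apply/eqP; apply: contraT => Hj.
    by exfalso; apply: H; exists j.
  by rewrite mul0mx.
have b1 : 1 <= b 0 j by have := b0 j; move: bj; lia.
have rowA i : intfun R (row i M) = row i A by rewrite /intfun /A /intmx map_row.
have fn i : facet_normal P (row i M) /\ face P (row i A) v.
  by rewrite -rowA; apply/HM; exists i.
exists (row j M); split; first exact: (fn j).1.
have D x : P x -> 0 <= pairing (row j A) (x - v) <= pairing (intfun R u) (x - v).
  move=> Px.
  have nn i : 0 <= pairing (row i A) (x - v).
    by rewrite pairingBr subr_ge0; apply: (fn i).2.2.
  rewrite nn /= uE pairing_mulmx (bigD1 j) //= -[X in X <= _]addr0.
  apply: lerD.
    rewrite mxE -[X in X <= _]mul1r; apply: ler_wpM2r => //.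
    by rewrite ler1z.
  by apply: sumr_ge0 => i _; rewrite mxE mulr_ge0 // ler0z.
move=> w'' [[x [y [Px Py <-]]] _].
have := D x Px; have := D y Py.
have := Bw x v Px Pv; have := Bw y v Py Pv.
rewrite !pairingBr.
move=> /ler_normlP [_ h1] /ler_normlP [_ h2] /andP [h3 h4] /andP [h5 h6].
by rewrite ler_norml rowA; apply/andP; split; lra.
Qed.

Lemma facet_list : exists L : seq 'rV[int]_d,
  (forall u, u \in L -> facet_normal P u) /\ (forall u, facet_normal P u -> u \in L).
Proof.
case: Hdel => FD FN VX.
have H n : (n <= size V)%N -> exists L : seq 'rV[int]_d,
   (forall u, u \in L -> facet_normal P u) /\
   forall k, (k < n)%N -> is_vertex P V`_k ->
     forall u, facet_normal P u /\ face P (intfun R u) V`_k -> u \in L.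
  elim: n => [|n IH] Hn.
    by exists [::]; split.
  have [L [HL1 HL2]] := IH (ltnW Hn).
  case: (classic (is_vertex P V`_n)) => vn; last first.
    exists L; split => // k; rewrite ltnS leq_eqVlt => /orP [/eqP -> //|]; exact: HL2.
  have [M [uM HM]] := VX _ vn.
  exists (L ++ [seq row i M | i <- enum 'I_d]); split.
    move=> u; rewrite mem_cat => /orP [/HL1 //|/mapP [i _ ->]].
    by have [] := (HM (row i M)).2 (ex_intro _ i erefl).
  move=> k; rewrite ltnS leq_eqVlt => /orP [/eqP -> _ u Hu|Hk vk u Hu].
    have [i ->] := (HM u).1 Hu.
    by rewrite mem_cat; apply/orP; right; apply: map_f; rewrite mem_enum.
  by rewrite mem_cat (HL2 k Hk vk u Hu).
have [L [HL1 HL2]] := H _ (leqnn _).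
exists L; split => // u fu.
have [x0 Px0] := pt.
have [k [vk fk]] := vertex_exists (intfun R u) Px0.
exact: (HL2 k (ltn_ord k) vk u (conj fu fk)).
Qed.

Lemma min_width (L : seq 'rV[int]_d) : L != [::] ->
  exists2 us, us \in L & exists ws, is_width P (intfun R us) ws /\
    forall u, u \in L -> forall w, is_width P (intfun R u) w -> ws <= w.
Proof.
have [x0 Px0] := pt.
elim: L => [//|a L IH] _.
have [wa Ha] := ex_width (intfun R a) Px0.
case: (eqVneq L [::]) => [->|LN].
  exists a; first by rewrite mem_seq1.
  exists wa; split => // u; rewrite mem_seq1 => /eqP -> w Hw.
  by rewrite (width_unique Ha Hw).
have [u1 u1L [w1 [H1 B1]]] := IH LN.
case: (lerP wa w1) => c.
  exists a; first by rewrite mem_head.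
  exists wa; split => // u; rewrite in_cons => /orP [/eqP ->|uL] w Hw.
    by rewrite (width_unique Ha Hw).
  exact: le_trans c (B1 u uL w Hw).
exists u1; first by rewrite in_cons u1L orbT.
exists w1; split => // u; rewrite in_cons => /orP [/eqP ->|uL] w Hw.
  by rewrite -(width_unique Ha Hw) ltW.
exact: (B1 u uL w Hw).
Qed.

End Main.

Unset Implicit Arguments.

Theorem lemma3p9 (R : realFieldType) (d : nat) (V : seq 'rV[R]_d) :
  (0 < d)%N -> delzant (conv V) ->
  exists w : R, is_lattice_width (conv V) w /\ is_facet_width (conv V) w.
Proof.
move=> d0 Hdel.
have [x0 Px0] := pt Hdel.
have [L [HL1 HL2]] := facet_list Hdel.
have LN : L != [::].
  case: Hdel => FD FN VX.
  have [k [vk _]] := vertex_exists 0 Px0.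
  have [M [uM HM]] := VX _ vk.
  have [fn _] := (HM (row (Ordinal d0) M)).2 (ex_intro _ _ erefl).
  by move: (HL2 _ fn); case: L {HL1 HL2}.
have [us usL [ws [Hs Bs]]] := min_width Hdel LN.
exists ws; split.
  split.
    exists us; split => //; by have [[]] := HL1 _ usL.
  move=> u w' u0 Hw'.
  have [u' [fu' B']] := cmp_lemma d0 Hdel u0 Hw'.
  have [w'' H''] := ex_width (intfun R u') Px0.
  exact: le_trans (Bs u' (HL2 _ fu') _ H'') (B' _ H'').
split.
  by exists us; split => //; apply: HL1.
by move=> u w' fu Hw'; apply: Bs (HL2 _ fu) _ Hw'.
Qed.
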